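(* Let $(E,\tau)$ be a uniquely generated convex space such that every $A\subseteq E$ has a unique inclusion-maximal generator. Then the partition $\mathcal{P}$ of $2^E$ into the equivalence classes of the relation $X\sim Y\iff\tau(X)=\tau(Y)$ is a hypercube partition of $2^E$, i.e., every equivalence class is an interval $[A,B]=\{C\subseteq E:A\subseteq C\subseteq B\}$ for some $A\subseteq B\subseteq E$.
   Context: $E$ is a finite set and $\tau:2^E\to 2^E$. $(E,\tau)$ is a convex space if (C1) $Y\subseteq\tau(Y)$ for all $Y\subseteq E$, and (convexity) for all $Y_1\subseteq Y_2\subseteq Y_3\subseteq E$ with $\tau(Y_1)=\tau(Y_3)$ we have $\tau(Y_2)=\tau(Y_1)$. For $A\subseteq E$, a generator of $A$ is any $B\subseteq E$ with $\tau(B)=\tau(A)$; a basis of $A$ is an inclusion-minimal generator of $A$. The space is uniquely generated if every $A\subseteq E$ has exactly one basis. A hypercube partition of $2^E$ is a partition of $2^E$ into disjoint intervals $[A,B]$. *)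

(* Defs.v *)
From mathcomp Require Import all_boot.
Set Implicit Arguments. Unset Strict Implicit. Unset Printing Implicit Defensive.

Section Defs.
Variable E : finType.
Variable tau : {set E} -> {set E}.

Definition extensive := forall Y : {set E}, Y \subset tau Y.

Definition convexity := forall Y1 Y2 Y3 : {set E},
  Y1 \subset Y2 -> Y2 \subset Y3 -> tau Y1 = tau Y3 -> tau Y2 = tau Y1.

Definition convex_space := extensive /\ convexity.

Definition generator (A B : {set E}) := tau B = tau A.

Definition basis (A B : {set E}) :=
  generator A B /\ forall C : {set E}, C \subset B -> generator A C -> C = B.

Definition max_generator (A B : {set E}) :=
  generator A B /\ forall C : {set E}, B \subset C -> generator A C -> C = B.

Definition uniquely_generated :=
  forall A : {set E}, exists! B : {set E}, basis A B.

Definition unique_max_generator :=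
  forall A : {set E}, exists! B : {set E}, max_generator A B.

Definition interval (A B : {set E}) : {set {set E}} :=
  [set C : {set E} | (A \subset C) && (C \subset B)].

Definition tau_class (X : {set E}) : {set {set E}} :=
  [set Y : {set E} | tau Y == tau X].

Definition tau_partition : {set {set {set E}}} :=
  [set tau_class X | X : {set E}].

Definition hypercube_partition (P : {set {set {set E}}}) :=
  partition P [set: {set E}] /\
  forall K, K \in P -> exists A B : {set E}, A \subset B /\ K = interval A B.
End Defs.

(* Main.v *)
Require Import Defs.
From mathcomp Require Import all_boot.

Lemma class_interval (E : finType) (tau : {set E} -> {set E}) :
  convexity tau -> uniquely_generated tau -> unique_max_generator tau ->
  forall X : {set E}, exists A B : {set E}, A \subset B /\ tau_class tau X = interval A B.
Proof.
move=> cv ug umg X.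
have [A [[gA mA] uA]] := ug X.
have [B [[gB mB] uB]] := umg X.
have inA : forall Y, tau Y = tau X -> A \subset Y.
  move=> Y gY.
  have [C /minsetP [/eqP gC mC] sCY] := @minset_exists _ (fun C => tau C == tau X) Y (introT eqP gY).
  have -> : A = C.
    apply: uA; split=> // D sDC gD; apply: mC=> //; exact/eqP.
  done.
have inB : forall Y, tau Y = tau X -> Y \subset B.
  move=> Y gY.
  have [C /maxsetP [/eqP gC mC] sYC] := @maxset_exists _ (fun C => tau C == tau X) Y (introT eqP gY).
  have -> : B = C.
    apply: uB; split=> // D sCD gD; apply: mC=> //; exact/eqP.
  done.
exists A, B; split; first exact: inB.
apply/setP=> Y; rewrite !inE; apply/eqP/andP.
  by move=> gY; split; [apply: inA | apply: inB].
case=> sAY sYB.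
have e : tau A = tau B by rewrite gA gB.
by rewrite (cv _ _ _ sAY sYB e).
Qed.

Theorem mainTheorem19 (E : finType) (tau : {set E} -> {set E}) :
  convex_space tau ->
  uniquely_generated tau ->
  unique_max_generator tau ->
  hypercube_partition (tau_partition tau).
Proof.
move=> [ext cv] ug umg; split.
  apply/and3P; split.
  - apply/eqP/setP=> Y; rewrite inE; apply/bigcupP; exists (tau_class tau Y).
      by apply/imsetP; exists Y.
    by rewrite inE.
  - apply/trivIsetP=> K1 K2 /imsetP [X1 _ ->] /imsetP [X2 _ ->] ne.
    apply/pred0P=> Y; rewrite /= !inE; apply/negP=> /andP [/eqP h1 /eqP h2].
    move/negP: ne; apply; apply/eqP/setP=> Z; rewrite !inE -h1 h2 //.
  - apply/imsetP=> [[X _ h]].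
    have : X \in tau_class tau X by rewrite inE.
    by rewrite -h inE.
move=> K /imsetP [X _ ->]; exact: class_interval.
Qed.
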